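(* Let $V$ be a commutative valuation domain with quotient field $F$, $K/F$ a finite Galois extension with group $G$, $S$ the integral closure of $V$ in $K$, and $f:G\times G\to S\setminus\{0\}$ a normalized $2$-cocycle. For $\sigma\in G$ let $I_\sigma=\bigcap M$, the intersection over those maximal ideals $M$ of $S$ with $f(\sigma,\sigma^{-1})\notin M$. Then $J_G(A_f)=\sum_{\sigma\in G}I_\sigma x_\sigma$.
   Context: $V$ has arbitrary Krull dimension. A normalized 2-cocycle satisfies $\sigma(f(\tau,\gamma))f(\sigma,\tau\gamma)=f(\sigma,\tau)f(\sigma\tau,\gamma)$, $f(1,\sigma)=f(\sigma,1)=1$; values need not be units. $A_f=\bigoplus_{\sigma\in G}Sx_\sigma$ (free left $S$-module) with $(sx_\sigma)(tx_\tau)=s\,\sigma(t)f(\sigma,\tau)x_{\sigma\tau}$, $G$-graded with components $Sx_\sigma$; $J_G(A_f)$ is its graded Jacobson radical (intersection of graded left ideals maximal among proper graded left ideals). An empty intersection of ideals is $S$. *)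

(* Defs.v *)
From HB Require Import structures.
From mathcomp Require Import all_boot all_order all_algebra all_fingroup all_field.
Set Implicit Arguments. Unset Strict Implicit. Unset Printing Implicit Defensive.
Import GRing.Theory.
Local Open Scope ring_scope.

Section CrossedProduct.
Variables (F : fieldType) (L : splittingFieldType F).

Notation gT := (gal_of {:L}).

(* Composition in the usual (paper) order: (gcomp s t) a = s (t a).
   Note mathcomp's group law satisfies (x * y)%g a = y (x a). *)
Definition gcomp (s t : gT) : gT := (t * s)%g.

Definition valuation_ring_of (V : {pred F}) : Prop :=
  [/\ 1 \in V, (forall x y, x \in V -> y \in V -> x - y \in V),
      (forall x y, x \in V -> y \in V -> x * y \in V)
    & (forall x : F, x != 0 -> x \in V \/ x^-1 \in V)].

Definition integral_closure (V : {pred F}) (x : L) : Prop :=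
  exists p : {poly F}, [/\ p \is monic, (forall i, p`_i \in V)
                         & root (map_poly (in_alg L) p) x].

Definition normalized_2cocycle (f : gT -> gT -> L) : Prop :=
  (forall s t g : gT, s (f t g) * f s (gcomp t g) = f s t * f (gcomp s t) g) /\
  (forall s : gT, f 1%g s = 1 /\ f s 1%g = 1).

Definition ideal_of (S : L -> Prop) (M : L -> Prop) : Prop :=
  [/\ (forall x, M x -> S x), M 0, (forall x y, M x -> M y -> M (x + y))
    & (forall s x, S s -> M x -> M (s * x))].

Definition maximal_ideal_of (S : L -> Prop) (M : L -> Prop) : Prop :=
  [/\ ideal_of S M, ~ M 1
    & forall J, ideal_of S J -> (forall x, M x -> J x) ->
        ~ J 1 -> forall x, J x -> M x].

(* I_sigma = intersection of the maximal ideals M of S with f(s,s^-1) not in M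
   (empty intersection = S). *)
Definition I_sigma (S : L -> Prop) (f : gT -> gT -> L) (s : gT) (x : L) : Prop :=
  S x /\ forall M, maximal_ideal_of S M -> ~ M (f s (s^-1)%g) -> M x.

(* The crossed product A_f = (+)_s S x_s, elements a = sum_s a(s) x_s
   represented by their coefficient functions. *)
Definition Af (S : L -> Prop) (a : {ffun gT -> L}) : Prop := forall s, S (a s).

(* (s a x_s)(b x_t) = a s(b) f(s,t) x_{st} *)
Definition Af_mul (f : gT -> gT -> L) (a b : {ffun gT -> L}) : {ffun gT -> L} :=
  [ffun r => \sum_(s : gT) \sum_(t : gT | gcomp s t == r) a s * s (b t) * f s t].

Definition homog (c : L) (s : gT) : {ffun gT -> L} :=
  [ffun t => if t == s then c else 0].

Definition graded_left_ideal (S : L -> Prop) (f : gT -> gT -> L)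
    (I : {ffun gT -> L} -> Prop) : Prop :=
  [/\ (forall a, I a -> Af S a), I 0,
      (forall a b, I a -> I b -> I (a - b)),
      (forall b a, Af S b -> I a -> I (Af_mul f b a))
    & (forall a, I a -> forall s, I (homog (a s) s))].

Definition proper_in (S : L -> Prop) (I : {ffun gT -> L} -> Prop) : Prop :=
  exists a, Af S a /\ ~ I a.

Definition maximal_graded_left_ideal (S : L -> Prop) (f : gT -> gT -> L)
    (I : {ffun gT -> L} -> Prop) : Prop :=
  [/\ graded_left_ideal S f I, proper_in S I
    & forall J, graded_left_ideal S f J -> proper_in S J ->
        (forall a, I a -> J a) -> forall a, J a -> I a].

(* graded Jacobson radical: intersection of the maximal graded left ideals
   (empty intersection = A_f). *)
Definition graded_jacobson (S : L -> Prop) (f : gT -> gT -> L)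
    (a : {ffun gT -> L}) : Prop :=
  Af S a /\ forall I, maximal_graded_left_ideal S f I -> I a.

End CrossedProduct.

(* Main.v *)
Require Import Defs.
From HB Require Import structures.
From mathcomp Require Import all_boot all_order all_algebra all_fingroup all_field.
From Stdlib Require Import Classical.
Set Implicit Arguments. Unset Strict Implicit. Unset Printing Implicit Defensive.
Import GRing.Theory.
Local Open Scope ring_scope.

Section Sub.
Variables (F : fieldType) (V : {pred F}).
Hypothesis HV : valuation_ring_of V.

Definition Vb : pred F := fun x => x \in V.
Lemma Vb_sub : subring_closed Vb.
Proof. by case: HV => H1 HB HM _; split; [exact: H1 | exact: HB | exact: HM]. Qed.
HB.instance Definition _ := GRing.isSubringClosed.Build F Vb Vb_sub.
Definition subR := {x : F | Vb x}.
HB.instance Definition _ := [isSub of subR for @sval F Vb].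
HB.instance Definition _ := [Choice of subR by <:].
HB.instance Definition _ := GRing.SubChoice_isSubComNzRing.Build F Vb subR Vb_sub.
Variable (L : splittingFieldType F).

Definition emb : subR -> L := in_alg L \o val.

Lemma icE (x : L) : integral_closure V x <-> integralOver emb x.
Proof.
split.
  case=> p [mp cp rp].
  pose q : {poly subR} := \poly_(i < size p) insubd 0 p`_i.
  have qp : map_poly val q = p.
    apply/polyP => i; rewrite coef_map coef_poly.
    case: ltnP => H /=; first by rewrite insubdK //; apply: cp.
    by rewrite /= nth_default.
  exists q.
    move: mp; rewrite -qp !monicE lead_coef_map_inj //. exact: val_inj.
  by move: rp; rewrite -qp -map_poly_comp.
case=> q mq rq; exists (map_poly val q); split.
- by rewrite monicE lead_coef_map_inj //; exact: val_inj.
- by move=> i; rewrite coef_map; apply: valP.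
- by rewrite -map_poly_comp.
Qed.
Local Notation S := (@integral_closure F L V).
Lemma S_add x y : S x -> S y -> S (x + y).
Proof. by move=> /icE a /icE b; apply/icE; apply: integral_add. Qed.
Lemma S_mul x y : S x -> S y -> S (x * y).
Proof. by move=> /icE a /icE b; apply/icE; apply: integral_mul. Qed.
Lemma S_opp x : S x -> S (- x).
Proof. by move=> /icE a; apply/icE; apply: integral_opp. Qed.
Lemma S_0 : S 0. Proof. by apply/icE; apply: integral0. Qed.
Lemma S_1 : S 1. Proof. by apply/icE; apply: integral1. Qed.
Lemma S_sub x y : S x -> S y -> S (x - y).
Proof. by move=> ? ?; apply: S_add => //; apply: S_opp. Qed.
Lemma S_gal (s : gal_of {:L}) x : S x -> S (s x).
Proof.
case=> p [mp cp rp]; exists p; split => //.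
move: rp; rewrite /root => /eqP rp; apply/eqP.
have h c : s (in_alg L c) = in_alg L c by rewrite /= linearZ /= rmorph1.
have -> : map_poly (in_alg L) p = map_poly s (map_poly (in_alg L) p).
  by apply/polyP => i; rewrite !coef_map /= h.
by rewrite horner_map rp rmorph0.
Qed.
End Sub.

Section Main.
Variables (F : fieldType) (L : splittingFieldType F) (V : {pred F}).
Variable (f : gal_of {:L} -> gal_of {:L} -> L).
Hypothesis HV : valuation_ring_of V.
Hypothesis Hf : forall s t, integral_closure V (f s t) /\ f s t != 0.
Hypothesis Hc : normalized_2cocycle f.
Local Notation gT := (gal_of {:L}).
Local Notation S := (@integral_closure F L V).
Let S0 := S_0 HV L.
Let S1 := S_1 HV L.
Let Sadd := @S_add _ _ HV L.
Let Smul := @S_mul _ _ HV L.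
Let Sopp := @S_opp _ _ HV L.
Let Ssub := @S_sub _ _ HV L.

Lemma gcompE (s t : gT) x : (gcomp s t) x = s (t x).
Proof. by rewrite /gcomp galM // memvf. Qed.
Lemma galVK (s : gT) x : (s^-1)%g (s x) = x.
Proof. by rewrite -galM ?memvf // mulgV gal_id. Qed.
Lemma galKV (s : gT) x : s ((s^-1)%g x) = x.
Proof. by rewrite -galM ?memvf // mulVg gal_id. Qed.
Lemma f11 s : f 1%g s = 1. Proof. by case: Hc => _ /(_ s) []. Qed.
Lemma f1r s : f s 1%g = 1. Proof. by case: Hc => _ /(_ s) []. Qed.
Lemma fS s t : S (f s t). Proof. by case: (Hf s t). Qed.

Lemma ffV (s : gT) : s (f (s^-1)%g s) = f s (s^-1)%g.
Proof.
case: Hc => /(_ s (s^-1)%g s) + _.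
by rewrite /gcomp mulgV mulVg f1r f11 !mulr1.
Qed.

Lemma cocyc_key (s t : gT) :
  ((gcomp s t)^-1)%g (f s t) * f ((gcomp s t)^-1)%g (gcomp s t)
  = f ((gcomp s t)^-1)%g s * f (t^-1)%g t.
Proof.
case: Hc => /(_ ((gcomp s t)^-1)%g s t) + _.
have -> : gcomp ((gcomp s t)^-1)%g s = (t^-1)%g by rewrite /gcomp invMg mulKVg.
done.
Qed.

Lemma galcomp_key (s t : gT) x : ((gcomp s t)^-1)%g (s x) = (t^-1)%g x.
Proof.
rewrite -galM ?memvf //.
by rewrite /gcomp invMg mulKVg.
Qed.

Definition JN (N : L -> Prop) (a : {ffun gT -> L}) : Prop :=
  Af S a /\ forall t : gT, N ((t^-1)%g (a t) * f (t^-1)%g t).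

Lemma homog_mul c d (s t : gT) :
  Af_mul f (homog c s) (homog d t) = homog (c * s d * f s t) (gcomp s t).
Proof.
apply/ffunP => r; rewrite !ffunE (bigD1 s) //= [X in _ + X]big1 => [|s' ns']; last first.
  by apply: big1 => t' _; rewrite ffunE (negbTE ns') !mul0r.
rewrite ffunE eqxx addr0 big_mkcond (bigD1 t) //= [X in _ + X]big1 => [|t' nt']; last first.
  by rewrite ffunE (negbTE nt') rmorph0 mulr0 mul0r if_same.
by rewrite ffunE eqxx addr0 eq_sym.
Qed.

Lemma mul_homog1 b : Af_mul f b (homog 1 1%g) = b.
Proof.
apply/ffunP => r; rewrite !ffunE (bigD1 r) //= [X in _ + X]big1 => [|s ns]; last first.
  apply: big1 => t /eqP Ht; rewrite ffunE; case: eqP => [E|_].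
    by move: Ht; rewrite E /gcomp mul1g => Ht; rewrite Ht eqxx in ns.
  by rewrite rmorph0 mulr0 mul0r.
rewrite addr0 big_mkcond (bigD1 1%g) //= [X in _ + X]big1 => [|t nt]; last first.
  by rewrite ffunE (negbTE nt) rmorph0 mulr0 mul0r if_same.
by rewrite /gcomp mul1g eqxx ffunE eqxx rmorph1 f1r !mulr1 addr0.
Qed.


Lemma S_sum (I : finType) (P : pred I) (F0 : I -> L) :
  (forall i, P i -> S (F0 i)) -> S (\sum_(i | P i) F0 i).
Proof. by move=> H; apply: big_ind. Qed.

Lemma JN_graded N : ideal_of S N -> graded_left_ideal S f (JN N).
Proof.
case=> NS N0 NA NM.
have Sm1 : S (-1) by apply: Sopp; apply: S1.
split.
- by move=> a [].
- split => [s|t]; rewrite ffunE; first exact: S0.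
  by rewrite rmorph0 mul0r.
- move=> a b [Aa Na] [Ab Nb]; split => [s|t]; rewrite !ffunE.
    exact: Ssub.
  rewrite rmorphB mulrBl; apply: NA; first exact: Na.
  by rewrite -mulN1r; apply: NM; [exact: Sm1 | exact: Nb].
- move=> b a Ab [Aa Na]; split => [r|r]; rewrite ffunE.
    apply: S_sum => s _; apply: S_sum => t _.
    by apply: Smul; [apply: Smul; [exact: Ab | apply: S_gal; exact: Aa] | exact: fS].
  rewrite rmorph_sum mulr_suml; apply: big_ind => //; move=> s _.
  rewrite rmorph_sum mulr_suml; apply: big_ind => //; move=> t /eqP Er; subst r.
  rewrite !rmorphM /= galcomp_key -mulrA cocyc_key.
  rewrite mulrACA; apply: NM; last exact: Na.
  by apply: Smul; [apply: S_gal; exact: Ab | exact: fS].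
- move=> a [Aa Na] s; split => [t|t]; rewrite ffunE; case: eqP => [E|_].
  + exact: Aa.
  + exact: S0.
  + by subst t; exact: Na.
  + by rewrite rmorph0 mul0r.
Qed.

Lemma homog_Af c s : S c -> Af S (homog c s).
Proof. by move=> Sc t; rewrite ffunE; case: eqP => _ //; apply: S0. Qed.

Lemma JN_proper N : ~ N 1 -> proper_in S (JN N).
Proof.
move=> N1; exists (homog 1 1%g); split; first by apply: homog_Af; apply: S1.
case=> _ /(_ 1%g); rewrite ffunE eqxx invg1 gal_id f11 mulr1; exact: N1.
Qed.

Lemma N_homog1 N : ideal_of S N -> forall x, N x -> JN N (homog x 1%g).
Proof.
case=> NS N0 _ _ x Nx; split; first by apply: homog_Af; apply: NS.
move=> t; rewrite ffunE; case: eqP => [->|_].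
  by rewrite invg1 gal_id f11 mulr1.
by rewrite rmorph0 mul0r.
Qed.

Lemma JN_mono (N N' : L -> Prop) a : (forall x, N x -> N' x) -> JN N a -> JN N' a.
Proof. by move=> H [Aa Na]; split => // t; apply: H. Qed.

Definition Nof (J : {ffun gT -> L} -> Prop) x := S x /\ J (homog x 1%g).

Lemma J_all J : graded_left_ideal S f J -> J (homog 1 1%g) -> forall b, Af S b -> J b.
Proof. by case=> _ _ _ HM _ H1 b Ab; rewrite -(mul_homog1 b); apply: HM. Qed.

Lemma Nof_ideal J : graded_left_ideal S f J -> ideal_of S (Nof J).
Proof.
move=> HJ; have [JA J0 JB JM JH] := HJ.
have h0 : homog (0 : L) (1%g : gT) = (0 : {ffun gT -> L}) by apply/ffunP => t; rewrite !ffunE if_same.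
split.
- by move=> x [].
- by split; [exact: S0 | rewrite h0].
- move=> x y [Sx Jx] [Sy Jy]; split; first exact: Sadd.
  have -> : homog (x + y) 1%g = homog x 1%g - (0 - homog y 1%g).
    by apply/ffunP => t; rewrite !ffunE; case: eqP => _; rewrite ?subr0 ?sub0r ?opprK.
  exact: JB Jx (JB _ _ J0 Jy).
- move=> s x Ss [Sx Jx]; split; first exact: Smul.
  have := JM _ _ (homog_Af 1%g Ss) Jx.
  by rewrite homog_mul gal_id f11 mulr1 /gcomp mulg1.
Qed.

Lemma Nof_proper J : graded_left_ideal S f J -> proper_in S J -> ~ Nof J 1.
Proof.
move=> HJ [b [Ab nJb]] [_ J1]; apply: nJb; exact: J_all HJ J1 b Ab.
Qed.

Lemma J_sub_JN J : graded_left_ideal S f J -> forall a, J a -> JN (Nof J) a.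
Proof.
move=> HJ a Ja; have [JA J0 JB JM JH] := HJ.
split; first exact: JA.
move=> t; split.
  by apply: Smul; [apply: S_gal; exact: JA | exact: fS].
have := JM _ _ (homog_Af (t^-1)%g S1) (JH a Ja t).
by rewrite homog_mul mul1r /gcomp mulgV.
Qed.


Lemma JN_max N : maximal_ideal_of S N -> maximal_graded_left_ideal S f (JN N).
Proof.
case=> HN N1 Nmax; split; [exact: JN_graded | exact: JN_proper |].
move=> J HJ HJp sub a Ja.
have sNN : forall x, Nof J x -> N x.
  apply: Nmax; [exact: Nof_ideal | | exact: Nof_proper].
  move=> x Nx; split; first by case: HN => NS _ _ _; exact: NS.
  by apply: sub; apply: N_homog1.
exact: JN_mono sNN (J_sub_JN HJ Ja).
Qed.

Lemma max_prime M : maximal_ideal_of S M ->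
  forall x y, S x -> S y -> M (x * y) -> ~ M x -> M y.
Proof.
case=> [[MS M0 MA MM] M1 Mmax] x y Sx Sy Mxy nMx.
pose J z := exists m s, [/\ M m, S s & z = m + s * x].
have HJ : ideal_of S J.
  split.
  - by move=> z [m [s [Mm Ss ->]]]; apply: Sadd; [exact: MS | exact: Smul].
  - by exists 0, 0; split; [exact: M0 | exact: S0 | rewrite mul0r addr0].
  - move=> z1 z2 [m1 [s1 [M1' S1' ->]]] [m2 [s2 [M2' S2' ->]]].
    exists (m1 + m2), (s1 + s2); split; [exact: MA | exact: Sadd |].
    by rewrite mulrDl addrACA.
  - move=> s z Ss [m [s' [Mm Ss' ->]]]; exists (s * m), (s * s'); split.
    + exact: MM.
    + exact: Smul.
    + by rewrite mulrDr mulrA.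
have J1 : J 1.
  apply: NNPP => nJ1; apply: nMx; apply: (Mmax J HJ) => //.
    by move=> z Mz; exists z, 0; split; [exact: Mz | exact: S0 | rewrite mul0r addr0].
  by exists 0, 1; split; [exact: M0 | exact: S1 | rewrite mul1r add0r].
case: J1 => m [s [Mm Ss E]].
have -> : y = m * y + s * (x * y) by rewrite mulrA -mulrDl -E mul1r.
by apply: MA; [rewrite mulrC; exact: MM | exact: MM].
Qed.

Lemma max_image M (s : gT) : maximal_ideal_of S M ->
  maximal_ideal_of S (fun y => S y /\ M (s y)).
Proof.
case=> [[MS M0 MA MM] M1 Mmax].
split.
- split.
  + by move=> x [].
  + by split; [exact: S0 | rewrite rmorph0].
  + move=> x y [Sx Mx] [Sy My]; split; [exact: Sadd | rewrite rmorphD; exact: MA].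
  + move=> c x Sc [Sx Mx]; split; [exact: Smul | rewrite rmorphM; apply: MM => //].
    exact: S_gal.
- by case=> _; rewrite rmorph1.
- move=> J [JS J0 JA JM] sub nJ1 x Jx.
  have HJ' : ideal_of S (fun y => S y /\ J ((s^-1)%g y)).
    split.
    + by move=> y [].
    + by split; [exact: S0 | rewrite rmorph0].
    + move=> u v [Su Ju] [Sv Jv]; split; [exact: Sadd | rewrite rmorphD; exact: JA].
    + move=> c u Sc [Su Ju]; split; [exact: Smul | rewrite rmorphM; apply: JM => //].
      exact: S_gal.
  have sMJ : forall y, M y -> S y /\ J ((s^-1)%g y).
    move=> y My; split; first exact: MS.
    apply: sub; split; first by apply: S_gal; exact: MS.
    by rewrite galKV.
  have nJ'1 : ~ (S 1 /\ J ((s^-1)%g 1)) by case=> _; rewrite rmorph1.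
  split; first exact: JS.
  apply: (Mmax _ HJ' sMJ nJ'1); split; first by apply: S_gal; exact: JS.
  by rewrite galVK.
Qed.


Lemma main_sec (a : {ffun gT -> L}) :
  graded_jacobson S f a <-> (forall s, I_sigma S f s (a s)).
Proof.
split.
- case=> Aa Hjac s; split; first exact: Aa.
  move=> M HM nf.
  have [_ Ns] := Hjac _ (JN_max (max_image s HM)).
  have [_ Ms] := Ns s.
  move: Ms; rewrite rmorphM => Ms; have : M (s ((s^-1)%g (a s)) * s (f (s^-1)%g s)) := Ms; rewrite galKV ffV {Ms} => Ms.
  apply: (max_prime HM (fS s (s^-1)%g) (Aa s)) => //.
  by rewrite mulrC.
- move=> H; split; first by move=> s; case: (H s).
  move=> I HI; have [HIg HIp HImax] := HI.
  have Nid := Nof_ideal HIg.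
  have NN1 := Nof_proper HIg HIp.
  have sub := J_sub_JN HIg.
  have Nmax : maximal_ideal_of S (Nof I).
    split => // J' HJ' sJ' nJ'1 x Jx.
    have HJJ := JN_graded HJ'.
    have := HImax _ HJJ (JN_proper nJ'1) (fun b Ib => JN_mono sJ' (sub b Ib)).
    move=> /(_ _ (N_homog1 HJ' Jx)) Ix; split => //.
    by case: HJ' => JS _ _ _; exact: JS.
  apply: (HImax _ (JN_graded Nid) (JN_proper NN1) sub).
  split; first by move=> s; case: (H s).
  move=> t.
  have HM := max_image (t^-1)%g Nmax.
  set M := (fun y => _) in HM.
  have Mt : M (a t * f t (t^-1)%g).
    have [[MS M0 MA MM] _ _] := HM.
    case: (classic (M (f t (t^-1)%g))) => Mf.
      by apply: MM => //; case: (H t).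
    have Mat := (H t).2 M HM Mf.
    by rewrite mulrC; apply: MM => //; exact: fS.
  have [_ ] := Mt.
  rewrite rmorphM.
  move=> X; have E := ffV (t^-1)%g; rewrite invgK in E; rewrite -E; exact: X.
Qed.

End Main.

Unset Implicit Arguments.
Theorem proposition2p4 (F : fieldType) (L : splittingFieldType F)
  (V : {pred F}) (f : gal_of {:L} -> gal_of {:L} -> L) :
  valuation_ring_of V ->
  galois 1%VS {:L} ->
  (forall s t, integral_closure V (f s t) /\ f s t != 0) ->
  normalized_2cocycle f ->
  forall a : {ffun gal_of {:L} -> L},
    graded_jacobson (integral_closure V) f a <->
    (forall s, I_sigma (integral_closure V) f s (a s)).
Proof. by move=> HV _ Hf Hc a; apply: main_sec. Qed.
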